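(* Let $N,k,s,d$ be positive integers with $s\ge3$, and let $N\ge s+1$ be a prime number. Let $\Lambda\subseteq\mathbb{Z}_N$ belong to the family $\Lambda_d(2k,s)$. Then $$T_k(\Lambda)\le 2^{9k}k^k|\Lambda|^k(s+1)^{2d}\cdot 2^{\frac{2sk(\log k)^2}{\log(k^{2s}|\Lambda|^{s-2})}}.$$
   Context: $\mathbb{Z}_N=\mathbb{Z}/N\mathbb{Z}$; $\log$ is the logarithm to base $2$. For $B\subseteq\mathbb{Z}_N$, $T_k(B)=|\{(r_1,\dots,r_k,r_1',\dots,r_k')\in B^{2k}: r_1+\dots+r_k=r_1'+\dots+r_k'\}|$. Family $\Lambda_d(k,s)$ (for positive integers $k,s,d$): a set $\Lambda=\{\lambda_1,\dots,\lambda_m\}\subseteq\mathbb{Z}_N$ with $\Lambda\cap(-\Lambda)=\emptyset$ belongs to $\Lambda_d(k,s)$ if for every choice of integer vectors $\vec v_1=(v_1^{(1)},\dots,v_1^{(d)}),\dots,\vec v_m=(v_m^{(1)},\dots,v_m^{(d)})\in\mathbb{Z}^d$ with $|v_j^{(i)}|\le s$ for all $i,j$ and $\sum_{j=1}^m|v_j^{(i)}|\le k$ for every $i\in[d]$, satisfying $\lambda_1\vec v_1+\dots+\lambda_m\vec v_m\equiv0\pmod N$ (componentwise), the $d\times m$ matrix $(v_j^{(i)})_{i\in[d],j\in[m]}$ has rank at most $d-1$ (rank of an integer matrix taken over $\mathbb{Q}$). *)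

(* Defs.v *)
From HB Require Import structures.
From mathcomp Require Import all_boot all_order all_algebra.
From mathcomp Require Import reals exp.
Set Implicit Arguments. Unset Strict Implicit. Unset Printing Implicit Defensive.
Import Order.TTheory GRing.Theory Num.Theory.
Local Open Scope ring_scope.

Definition Tk (N k : nat) (B : {set 'Z_N}) : nat :=
  #|[set p : {ffun 'I_k -> 'Z_N} * {ffun 'I_k -> 'Z_N} |
      [forall i, (p.1 i \in B) && (p.2 i \in B)] &&
      (\sum_(i < k) p.1 i == \sum_(i < k) p.2 i)]|%N.

(* Lambda in Lambda_d(k,s): Lambda ∩ (-Lambda) = ∅, and for every integer
   d x m matrix V (column j = vector v_j attached to lambda_j, the j-th
   element of an enumeration of Lambda) with |entries| <= s, row l1-norms
   <= k and sum_j lambda_j v_j = 0 in Z_N componentwise, rank_Q V <= d-1. *)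
Definition in_Lambda_d (N d k s : nat) (L : {set 'Z_N}) : Prop :=
  [disjoint L & [set - x | x in L]] /\
  forall V : 'M[int]_(d, #|L|),
    (forall i j, `|V i j| <= s%:Z) ->
    (forall i, \sum_(j < #|L|) `|V i j| <= k%:Z) ->
    (forall i, \sum_(j < #|L|) (@enum_val _ (mem L) j) *~ V i j = 0) ->
    (\rank (map_mx (fun z : int => z%:~R : rat) V) <= d.-1)%N.

Definition log2 {R : realType} (x : R) : R := ln x / ln 2.

(* Main.v *)
Require Import Defs.
From HB Require Import structures.
From mathcomp Require Import all_boot all_order all_algebra.
From mathcomp Require Import reals exp.
From mathcomp Require Import zify ring lra.
Import Order.TTheory GRing.Theory Num.Theory.

Module P1.
Set Implicit Arguments. Unset Strict Implicit. Unset Printing Implicit Defensive.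

Lemma card_bigcup_le (I U : finType) (P : {set I}) (Y : I -> {set U}) :
  (#|\bigcup_(a in P) Y a| <= \sum_(a in P) #|Y a|)%N.
Proof.
elim/big_rec2: _ => [|a n V _ le]; first by rewrite cards0.
by rewrite (leq_trans (leq_card_setU _ _).1) ?leq_add2l.
Qed.

Lemma leq_expb m n e : (m <= n)%N -> (m ^ e <= n ^ e)%N.
Proof. by move=> h; elim: e => // e IH; rewrite !expnS leq_mul. Qed.

Lemma ffact_le_exp n k : (n ^_ k <= n ^ k)%N.
Proof.
elim: k n => [|k IH] n; first by [].
rewrite ffactnS expnS leq_mul //; apply: leq_trans (IH _) _.
by apply: leq_expb; rewrite leq_pred.
Qed.
Lemma bin_le_exp n k : ('C(n, k) <= n ^ k)%N.
Proof.
apply: leq_trans (ffact_le_exp n k); rewrite -bin_ffact.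
by rewrite leq_pmulr // fact_gt0.
Qed.

Lemma exists_subset_card (T : finType) (B : {set T}) k :
  (k <= #|B|)%N -> exists P : {set T}, P \subset B /\ #|P| = k.
Proof.
move=> hk.
have : (0 < #|[set A : {set T} | A \subset B & #|A| == k]|)%N.
  by rewrite cards_draws bin_gt0.
case/card_gt0P => P; rewrite inE => /andP[h1 /eqP h2]; by exists P.
Qed.

Lemma two_ab (a b : nat) : (2 * (a * b) <= a * a + b * b)%N.
Proof.
case: (leqP a b) => h.
  by rewrite -(subnKC h); move: (b - a) => c; nia.
by rewrite -(subnKC (ltnW h)); move: (a - b) => c; nia.
Qed.

End P1.

Module P2.
Import P1.
Set Implicit Arguments. Unset Strict Implicit. Unset Printing Implicit Defensive.

Section Count.
Variables (N K : nat) (L : {set 'Z_N}).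
Local Notation U := {ffun 'I_K -> 'Z_N}.

Definition sig (r : U) : 'Z_N := (\sum_(i < K) r i)%R.
Definition cnt (X : {set U}) (x : 'Z_N) := #|[set u in X | sig u == x]|.
Definition PC (X Y : {set U}) (c : 'Z_N) :=
  #|[set p in setX X Y | (sig p.1 + c == sig p.2)%R]|.

Lemma PC_sum X Y c : PC X Y c = (\sum_(x : 'Z_N) cnt X x * cnt Y (x + c)%R)%N.
Proof.
rewrite /PC -sum1_card.
rewrite (partition_big (fun p : U * U => sig p.1) xpredT) //=.
apply: eq_bigr => x _.
rewrite sum1_card /cnt -cardsX; apply: eq_card => p.
case: p => [u v]; rewrite unfold_in /= !inE /=.
case: (sig u =P x) => [<-|ne]; last by rewrite !andbF.
by rewrite andbT (eq_sym (sig v)); case: (u \in X); case: (v \in Y).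
Qed.

Lemma PC_le X Y c : (2 * PC X Y c <= PC X X 0%R + PC Y Y 0%R)%N.
Proof.
rewrite !PC_sum.
have -> : (\sum_(x : 'Z_N) cnt Y x * cnt Y (x + 0)%R =
          \sum_(x : 'Z_N) cnt Y (x + c)%R * cnt Y (x + c)%R)%N.
  rewrite (reindex_inj (addIr c)) /=; apply: eq_bigr => x _; by rewrite addr0.
rewrite big_distrr -big_split /=; apply: leq_sum => x _.
by rewrite addr0 two_ab.
Qed.

Lemma cnt_split (X Y : {set U}) x :
  cnt X x = (cnt (X :&: Y) x + cnt (X :\: Y) x)%N.
Proof.
rewrite /cnt -(cardsID Y [set u in X | sig u == x]); congr (_ + _)%N;
  apply: eq_card => u; rewrite !inE; case: (u \in Y); case: (u \in X) => //=;
  by rewrite ?andbT ?andbF.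
Qed.

Lemma PC_split (X Y : {set U}) :
  (PC X X 0%R <= 2 * PC (X :&: Y) (X :&: Y) 0%R + 2 * PC (X :\: Y) (X :\: Y) 0%R)%N.
Proof.
rewrite !PC_sum !big_distrr -big_split /=; apply: leq_sum => x _.
rewrite addr0 (cnt_split X Y x).
move: (cnt (X :&: Y) x) (cnt (X :\: Y) x) => a b.
have := two_ab a b; nia.
Qed.

End Count.

End P2.

Module P3.
Import P1 P2.
Set Implicit Arguments. Unset Strict Implicit. Unset Printing Implicit Defensive.

Section Count2.
Variables (N K : nat) (L : {set 'Z_N}).
Local Notation U := {ffun 'I_K -> 'Z_N}.
Local Notation sig := (@sig N K).

Definition F (A : {set 'I_K}) : {set U} := [set r : U | r \in pffun_on (0%R : 'Z_N) A L].

Lemma memF (A : {set 'I_K}) (r : U) : reflect ((forall i, i \in A -> r i \in L) /\ (forall i, i \notin A -> r i = 0%R))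
  (r \in F A).
Proof.
rewrite inE; apply: (iffP pffun_onP) => [[sup im]|[h1 h2]]; split.
- by move=> i iA; apply: im; apply/imageP; exists i.
- move=> i iA; apply/eqP; apply: contraNT iA => ne.
  by apply: (subsetP sup); rewrite unfold_in /= ne.
- apply/subsetP => i; rewrite unfold_in /=; apply: contraNT => iA.
  by rewrite h2 ?eqxx.
- by move=> _ /imageP[i iA ->]; apply: h1.
Qed.

Lemma card_F (A : {set 'I_K}) : #|F A| = (#|L| ^ #|A|)%N.
Proof. by rewrite cardsE card_pffun_on. Qed.

Definition lam (j : 'I_#|L|) : 'Z_N := enum_val j.
Definition mu (A : {set 'I_K}) (r : U) (x : 'Z_N) := #|[set i in A | r i == x]|.

Lemma sig_F (A : {set 'I_K}) (r : U) : r \in F A -> sig r = (\sum_(i in A) r i)%R.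
Proof.
case/memF=> _ h2; rewrite /sig [RHS]big_mkcond /=; apply: eq_bigr => i _.
by case: ifP => // /negbT /h2 ->.
Qed.

Lemma one_index (A : {set 'I_K}) (r : U) i : r \in F A -> i \in A ->
  exists j0, r i = lam j0 /\ forall j, (r i == lam j) = (j == j0).
Proof.
case/memF=> h1 _ iA; have hi := h1 i iA.
exists (enum_rank_in hi (r i)); rewrite /lam enum_rankK_in //; split=> // j.
apply/eqP/eqP => [e|->]; last by rewrite enum_rankK_in.
by rewrite /lam in e; rewrite -{1}(enum_valK_in hi j) -e.
Qed.

Lemma sum_mult (V : nmodType) (h : 'Z_N -> V) (A : {set 'I_K}) (r : U) : r \in F A ->
  (\sum_(i in A) h (r i) = \sum_(j < #|L|) h (lam j) *+ mu A r (lam j))%R.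
Proof.
move=> rF.
transitivity (\sum_(j < #|L|) \sum_(i in A) (if r i == lam j then h (r i) else 0))%R.
  rewrite exchange_big /=; apply: eq_bigr => i iA.
  have [j0 [e1 e2]] := one_index rF iA.
  rewrite (bigD1 j0) //= e2 eqxx big1 ?addr0 // => j /negbTE ne.
  by rewrite e2 ne.
apply: eq_bigr => j _; rewrite -big_mkcondr /=.
rewrite (eq_bigr (fun _ => h (lam j))); last by move=> i /andP[_ /eqP ->].
rewrite (eq_bigl (fun i => i \in [set i in A | r i == lam j])); last by move=> i; rewrite inE.
by rewrite sumr_const.
Qed.

Lemma card_mu (A : {set 'I_K}) (r : U) : r \in F A -> (\sum_(j < #|L|) mu A r (lam j))%N = #|A|.
Proof.
move=> rF; rewrite -(sum1_card (mem A)).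
transitivity (\sum_(j < #|L|) \sum_(i in A) (r i == lam j : nat))%N.
  apply: eq_bigr => j _; rewrite /mu -sum1_card big_mkcond [RHS]big_mkcond /=.
  by apply: eq_bigr => i _; rewrite inE; case: (i \in A); case: (_ == _).
rewrite exchange_big /=; apply: eq_bigr => i iA.
have [j0 [e1 e2]] := one_index rF iA.
rewrite (bigD1 j0) //= e2 eqxx big1 ?addn0 // => j /negbTE ne.
by rewrite e2 ne.
Qed.

Lemma card_perm (A : {set 'I_K}) (r0 : U) : r0 \in F A ->
  (#|[set r in F A | [forall j, mu A r (lam j) == mu A r0 (lam j)]]| <= #|A| ^ #|A|)%N.
Proof.
move=> r0F.
set P := [set r in F A | _].
have claim : forall r i, r \in P -> i \in A -> exists2 j, j \in A & r0 j == r i.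
  move=> r i /setIdP[rF /forallP hm] iA.
  have [j0 [e1 _]] := one_index rF iA.
  have : (0 < mu A r0 (r i))%N.
    rewrite e1 -(eqP (hm j0)) -e1 /mu; apply/card_gt0P; exists i.
    by rewrite inE iA eqxx.
  by case/card_gt0P => j; rewrite inE => /andP[jA e]; exists j.
pose tau (r : U) : {ffun 'I_K -> option 'I_K} :=
  [ffun i => if i \in A then [pick j in A | r0 j == r i] else None].
have tau_inj : {in P &, injective tau}.
  move=> r1 r2 h1 h2 e; apply/ffunP => i.
  have := congr1 (fun f : {ffun 'I_K -> option 'I_K} => f i) e; rewrite /tau !ffunE.
  case: (boolP (i \in A)) => iA.
    case: pickP => [j /andP[_ /eqP e1]|none]; last first.
      by have [j jA ej] := claim r1 i h1 iA; move: (none j); rewrite jA ej.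
    case: pickP => [j' /andP[_ /eqP e2]|none] ee; last by [].
    by case: ee e1 e2 => -> <- <-.
  move=> _; case/setIdP: h1 => F1 _; case/setIdP: h2 => F2 _.
  case/memF: F1 => _ f1; case/memF: F2 => _ f2.
  by rewrite f1 ?f2.
have sub : tau @: P \subset [set f | f \in pffun_on None A [set Some j | j in A]].
  apply/subsetP => _ /imsetP[r rP ->]; rewrite inE; apply/pffun_onP; split.
    apply/subsetP => i; rewrite unfold_in /= ffunE.
    by case: (i \in A) => //; rewrite eqxx.
  move=> _ /imageP[i iA ->]; rewrite ffunE iA.
  case: pickP => [j /andP[jA _]|none]; first by apply: imset_f.
  by have [j jA ej] := claim r i rP iA; move: (none j); rewrite jA ej.
rewrite -(card_in_imset tau_inj); apply: leq_trans (subset_leq_card sub) _.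
rewrite cardsE card_pffun_on card_imset //; exact: Some_inj.
Qed.

End Count2.

End P3.

Module P4.
Import P1 P2 P3.
Set Implicit Arguments. Unset Strict Implicit. Unset Printing Implicit Defensive.
Local Open Scope ring_scope.

Section Rel.
Variables (N K d s : nat) (L : {set 'Z_N}).
Local Notation lam := (@lam N L).

Definition W := {ffun 'I_#|L| -> 'I_(2 * s).+1}.
Definition vint (w : W) (j : 'I_#|L|) : int := (w j)%:Z - s%:Z.
Definition S : {set W} :=
  [set w : W | (\sum_j `|vint w j| <= (2 * K)%:Z) && (\sum_j lam j *~ vint w j == 0)].

Lemma vint_bound w j : `|vint w j| <= s%:Z.
Proof. rewrite /vint; have := ltn_ord (w j); move: (nat_of_ord (w j)) => a ha; lia. Qed.

Lemma card_S : in_Lambda_d d (2 * K) s L -> (0 < d)%N -> (#|S| <= (2 * s).+1 ^ d.-1)%N.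
Proof.
move=> [_ HL] d0.
pose Mint : 'M[int]_(#|{: W}|, #|L|) :=
  \matrix_(i, j) (if enum_val i \in S then vint (enum_val i) j else 0).
pose M := map_mx (fun z : int => z%:~R : rat) Mint.
have rk : (\rank M <= d.-1)%N.
  rewrite leqNgt; apply/negP => hd; rewrite prednK // in hd.
  pose c0 := maxrankfun M.
  pose g := fun i : 'I_d => c0 (widen_ord hd i).
  pose V := rowsub g Mint.
  have := HL V.
  have eV : map_mx (fun z : int => z%:~R : rat) V = rowsub (widen_ord hd) (rowsub c0 M).
    by apply/matrixP => i j; rewrite !mxE.
  have free : row_free (rowsub (widen_ord hd) (rowsub c0 M)).
    apply: inj_row_free => v; rewrite rowsubE mulmxA => hv.
    have h0 : v *m rowsub (widen_ord hd) 1%:M = 0.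
      apply: (row_free_inj (maxrowsub_free M)); by rewrite hv mul0mx.
    apply/rowP => i; have := congr1 (fun x : 'rV_(\rank M) => x 0 (widen_ord hd i)) h0.
    rewrite !mxE (bigD1 i) //= !mxE eqxx mulr1 big1 ?addr0 // => k ne.
    rewrite !mxE; case: eqP => [e|]; last by rewrite mulr0.
    by case/eqP: ne; apply/val_inj; have /= := congr1 val e.
  rewrite -row_leq_rank in free.
  rewrite eV => H.
  have : (\rank (rowsub (widen_ord hd) (rowsub c0 M)) <= d.-1)%N.
    apply: H => i.
    - move=> j; rewrite !mxE; case: ifP => _; [exact: vint_bound | by rewrite normr0].
    - case: (boolP (enum_val (g i) \in S)) => h.
        under eq_bigr => j _ do rewrite !mxE h.
        by move: h; rewrite inE => /andP[].
      by rewrite big1 // => j _; rewrite !mxE (negbTE h) normr0.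
    - case: (boolP (enum_val (g i) \in S)) => h.
        under eq_bigr => j _ do rewrite !mxE h.
        by move: h; rewrite inE => /andP[_ /eqP].
      by rewrite big1 // => j _; rewrite !mxE (negbTE h) mulr0z.
  move: free; move: (\rank _) => x; lia.
pose Mt := M^T.
pose c := maxrankfun Mt.
have hsub : (Mt <= rowsub c Mt)%MS by rewrite eq_maxrowsub.
case/submxP: hsub => Z eZ.
have entry : forall (i : 'I_#|{: W}|) (j : 'I_#|L|), M i j = \sum_l Z j l * M i (c l).
  move=> i j; have := congr1 (fun X : 'M[rat]_(#|L|, #|{: W}|) => X j i) eZ; rewrite /= !mxE => ->.
  by apply: eq_bigr => l _; rewrite !mxE.
pose phi (w : W) : {ffun 'I_(\rank Mt) -> 'I_(2 * s).+1} := [ffun l => w (c l)].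
have Mw : forall w j, w \in S -> M (enum_rank w) j = (vint w j)%:~R.
  by move=> w j wS; rewrite !mxE enum_rankK wS.
have phi_inj : {in S &, injective phi}.
  move=> w1 w2 h1 h2 e; apply/ffunP => j.
  have e2 : M (enum_rank w1) j = M (enum_rank w2) j.
    rewrite !entry; apply: eq_bigr => l _; congr (_ * _).
    have := congr1 (fun f : {ffun 'I_(\rank Mt) -> 'I_(2 * s).+1} => f l) e.
    by rewrite !ffunE !Mw // /vint => ->.
  move: e2; rewrite !Mw // => /eqP; rewrite eqr_int /vint => /eqP e3.
  by apply/val_inj; move/addIr: e3 => /eqP; rewrite eqz_nat => /eqP.
rewrite -(card_in_imset phi_inj).
apply: leq_trans (subset_leq_card (subsetT _)) _.
rewrite cardsT card_ffun card_ord mxrank_tr.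
by rewrite card_ord; apply: leq_pexp2l.
Qed.

End Rel.

End P4.

Module P5.
Import P1 P2 P3 P4.
Set Implicit Arguments. Unset Strict Implicit. Unset Printing Implicit Defensive.
Local Open Scope ring_scope.

Section GoodPart.
Variables (N K s : nat) (L : {set 'Z_N}).
Local Notation U := {ffun 'I_K -> 'Z_N}.
Local Notation sig := (@sig N K).
Local Notation F := (@F N K L).
Local Notation mu := (@mu N K).
Local Notation lam := (@lam N L).
Local Notation S := (@S N K s L).
Local Notation vint := (@vint N s L).

Definition Good (A : {set 'I_K}) : {set U} := [set r : U | [forall j, (mu A r (lam j) <= s)%N]].

Definition fib (A : {set 'I_K}) (r : U) (w : W s L) : {set U} :=
  [set r' in F A | [forall j, (mu A r' (lam j))%:Z == (mu A r (lam j))%:Z - vint w j]].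

Lemma card_fib A r w : (#|fib A r w| <= K ^ #|A|)%N.
Proof.
case: (set_0Vmem (fib A r w)) => [->|[r0 r0f]]; first by rewrite cards0.
have r0F : r0 \in F A by case/setIdP: r0f.
apply: (@leq_trans (#|A| ^ #|A|)); last first.
  by apply: leq_expb; rewrite -[X in (_ <= X)%N]card_ord max_card.
apply: leq_trans (card_perm r0F).
  apply: subset_leq_card; apply/subsetP => r' /setIdP[r'F /forallP h].
  rewrite inE r'F /=; apply/forallP => j; case/setIdP: r0f => _ /forallP/(_ j) /eqP h0.
  by move/eqP: (h j); rewrite -h0 => /eqP; rewrite eqz_nat.
Qed.

Lemma card_A (A : {set 'I_K}) : (#|A| <= K)%N.
Proof. by rewrite -[X in (_ <= X)%N]card_ord max_card. Qed.

Lemma GG_bound A :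
  (PC (F A :&: Good A) (F A :&: Good A) 0%R <= #|S| * (#|L| ^ #|A| * K ^ #|A|))%N.
Proof.
set G := F A :&: Good A.
rewrite /PC; set X := [set p in setX G G | _].
have sub : X \subset \bigcup_(q in setX (F A) S) [set (q.1, r') | r' in fib A q.1 q.2].
  apply/subsetP => -[r r'] /setIdP[/setXP[/setIP[rF rG] /setIP[r'F r'G]]] /=.
  rewrite addr0 => /eqP esig.
  rewrite inE in rG; rewrite inE in r'G.
  have hr := forallP rG; have hr' := forallP r'G.
  pose w : W s L := [ffun j => inord (mu A r (lam j) + (s - mu A r' (lam j)))].
  have vw : forall j, vint w j = (mu A r (lam j))%:Z - (mu A r' (lam j))%:Z.
    move=> j; rewrite /vint ffunE inordK; last by have := hr j; have := hr' j; lia.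
    by have := hr j; have := hr' j; lia.
  apply/bigcupP; exists (r, w); last first.
    apply/imsetP; exists r' => //; rewrite inE r'F /=; apply/forallP => j.
    by rewrite vw; apply/eqP; lia.
  rewrite inE rF /= inE; apply/andP; split.
    under eq_bigr => j _ do rewrite vw.
    apply: (@le_trans _ _ (\sum_j ((mu A r (lam j))%:Z + (mu A r' (lam j))%:Z))).
      by apply: ler_sum => j _; lia.
    have hz : forall f : 'I_#|L| -> nat, \sum_j (f j)%:Z = (\sum_j f j)%N%:Z.
      by move=> f; rewrite (big_morph Posz PoszD (erefl _)).
    rewrite big_split /= !hz card_mu // card_mu //.
    by have := card_A A; lia.
  apply/eqP.
  have e : forall (x : 'Z_N) (n : nat), x *~ n%:Z = x *+ n by [].
  under eq_bigr => j _ do rewrite vw mulrzBl_nat !e.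
  rewrite sumrB -(sum_mult (fun x => x) rF) -(sum_mult (fun x => x) r'F).
  by rewrite -(sig_F rF) -(sig_F r'F) esig subrr.
apply: leq_trans (subset_leq_card sub) _.
apply: leq_trans (card_bigcup_le _ _) _.
apply: (@leq_trans (\sum_(q in setX (F A) S) K ^ #|A|)).
  apply: leq_sum => q _; apply: leq_trans (leq_imset_card _ _) (card_fib A q.1 q.2).
rewrite sum_nat_const cardsX card_F.
by rewrite (mulnC _ #|S|) mulnA.
Qed.

End GoodPart.

End P5.

Module P6.
Import P1 P2 P3 P4 P5.
Set Implicit Arguments. Unset Strict Implicit. Unset Printing Implicit Defensive.
Local Open Scope ring_scope.

Section BadPart.
Variables (N K s : nat) (L : {set 'Z_N}).
Local Notation U := {ffun 'I_K -> 'Z_N}.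
Local Notation sig := (@sig N K).
Local Notation F := (@F N K L).
Local Notation mu := (@mu N K).
Local Notation lam := (@lam N L).

Definition TA (A : {set 'I_K}) := PC (F A) (F A) 0.

Definition Yq (A : {set 'I_K}) (x0 x1 : 'Z_N) (P P' : {set 'I_K}) : {set U * U} :=
  [set p in setX (F A) (F A) | [&& [forall i in P, p.1 i == x0],
      [forall i in P', p.2 i == x1] & sig p.1 + 0 == sig p.2]].

Definition shift (P : {set 'I_K}) (x : 'Z_N) (r : U) : U :=
  [ffun i => r i - (if i \in P then x else 0)].

Lemma sig_shift (P : {set 'I_K}) x (r : U) : sig (shift P x r) = sig r - x *+ #|P|.
Proof.
rewrite /sig /shift; under eq_bigr => i _ do rewrite ffunE.
by rewrite sumrB -big_mkcond /= -sumr_const.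
Qed.

Lemma shift_F (A P : {set 'I_K}) x (r : U) : P \subset A -> r \in F A -> [forall i in P, r i == x] ->
  shift P x r \in F (A :\: P).
Proof.
move=> PA /memF[h1 h2] /forall_inP hP; apply/memF; split=> i; rewrite inE ffunE.
  by case/andP=> /negbTE -> iA; rewrite subr0 h1.
rewrite negb_and negbK; case: (boolP (i \in P)) => iP /=.
  by rewrite (eqP (hP i iP)) subrr.
by move=> iA; rewrite h2 // subr0.
Qed.

Lemma BB_term (A : {set 'I_K}) x0 x1 (P P' : {set 'I_K}) : P \subset A -> P' \subset A ->
  (2 * #|Yq A x0 x1 P P'| <= TA (A :\: P) + TA (A :\: P'))%N.
Proof.
move=> PA P'A.
pose phi (p : U * U) := (shift P x0 p.1, shift P' x1 p.2).
have phi_inj : injective phi.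
  move=> [a b] [a' b'] [e1 e2]; congr (_, _); apply/ffunP => i.
    by have := congr1 (fun f : U => f i) e1; rewrite !ffunE => /addIr.
  by have := congr1 (fun f : U => f i) e2; rewrite !ffunE => /addIr.
apply: leq_trans (PC_le _ _ (x0 *+ #|P| - x1 *+ #|P'|)).
rewrite leq_mul2l /= -(card_imset _ phi_inj) /PC; apply: subset_leq_card.
apply/subsetP => _ /imsetP[[a b] /setIdP[/setXP[aF bF] /and3P[ha hb /eqP he]] ->].
apply/setIdP; split; first by apply/setXP; split; apply: shift_F.
rewrite /= !sig_shift -he addr0.
by apply/eqP; rewrite addrA subrK.
Qed.

End BadPart.

End P6.

Module P7.
Import P1 P2 P3 P4 P5 P6.
Set Implicit Arguments. Unset Strict Implicit. Unset Printing Implicit Defensive.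
Local Open Scope ring_scope.

Section Induction.
Variables (R : realFieldType) (N K s : nat) (L : {set 'Z_N}) (rho : R).
Local Notation U := {ffun 'I_K -> 'Z_N}.
Local Notation sig := (@sig N K).
Local Notation F := (@F N K L).
Local Notation mu := (@mu N K).
Local Notation lam := (@lam N L).
Local Notation S := (@S N K s L).
Local Notation TA := (@TA N K L).
Local Notation Good := (@Good N K s L).
Local Notation m := #|L|.

Hypotheses (hs : (1 <= s)%N) (hm : (0 < m)%N) (hrho : 1 <= rho)
  (hK : ((K ^ s.+1)%N%:R : R) <= rho * (m ^ (s - 1))%N%:R).

Definition Bnd (n : nat) : R :=
  ((2 * 4 ^ n * #|S| * K ^ n * m ^ n)%N)%:R * rho ^+ (n %/ s.+1)%N.

Lemma Bad_empty (A : {set 'I_K}) : (#|A| <= s)%N -> F A :\: Good A = set0.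
Proof.
move=> hA; apply/eqP; rewrite setD_eq0; apply/subsetP => r _; rewrite inE.
apply/forallP => j; apply: leq_trans hA; rewrite /P3.mu.
by apply: subset_leq_card; apply/subsetP => i; rewrite inE => /andP[].
Qed.

Lemma main_ind n (A : {set 'I_K}) : #|A| = n -> (TA A)%:R <= Bnd n.
Proof.
elim/ltn_ind: n A => n IH A hA.
have split := PC_split (F A) (Good A).
have gg := GG_bound s L A.
rewrite hA in gg.
have rho_ge0 : 0 <= rho by apply: le_trans hrho.
have rhoq : forall q, 1 <= rho ^+ q by move=> q; apply: exprn_ege1.
case: (leqP n s) => hns.
  have hAs : (#|A| <= s)%N by rewrite hA.
  have e0 : PC (set0 : {set U}) set0 0 = 0%N.
    by rewrite /PC; apply: eq_card0 => -[a b]; rewrite !inE.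
  rewrite (Bad_empty hAs) e0 addn0 in split.
  rewrite /Bnd; set X := (2 * _ * _ * _ * _)%N.
  have hX : (TA A <= X)%N.
    rewrite /TA /X; apply: leq_trans split _.
    have := expn_gt0 4 n; move: gg; rewrite /=.
    move: (PC _ _ _) (4 ^ n)%N (#|S|) (m ^ n)%N (K ^ n)%N => a b c d e; nia.
  have := rhoq (n %/ s.+1)%N; have := ler0n R (TA A); move: hX; rewrite -(ler_nat R).
  move: (X%:R) ((TA A)%:R) (rho ^+ _) => x t y h1 h2 h3.
  nra.
set n' := (n - s.+1)%N.
have hn : n = (n' + s.+1)%N by rewrite /n'; lia.
have hq : (n %/ s.+1 = (n' %/ s.+1).+1)%N by rewrite hn divnDr // divnn /= addn1.
set Dr := [set P : {set 'I_K} | P \subset A & #|P| == s.+1].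
set Idx := setX (setX L Dr) (setX L Dr).
have bad : forall t, t \in F A -> t \notin Good A ->
    exists x, exists P, [/\ x \in L, P \in Dr & [forall i in P, t i == x]].
  move=> t tF; rewrite inE negb_forall => /existsP[j]; rewrite -ltnNge => hj.
  have [P [PB PC]] := exists_subset_card hj.
  exists (lam j), P; split; first exact: enum_valP.
    rewrite inE PC eqxx andbT; apply: subset_trans PB _.
    by apply/subsetP => i; rewrite inE => /andP[].
  by apply/forall_inP => i iP; have := subsetP PB i iP; rewrite inE => /andP[_].
have cover : [set p in setX (F A :\: Good A) (F A :\: Good A) | sig p.1 + 0 == sig p.2]
   \subset \bigcup_(q in Idx) Yq L A q.1.1 q.2.1 q.1.2 q.2.2.
  apply/subsetP => -[r r'] /setIdP[/setXP[/setDP[rF rG] /setDP[r'F r'G]] he].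
  have [x0 [P [x0L PD hP]]] := bad r rF rG.
  have [x1 [P' [x1L P'D hP']]] := bad r' r'F r'G.
  apply/bigcupP; exists ((x0, P), (x1, P')).
    by apply/setXP; split; apply/setXP; split.
  by apply/setIdP; split; [apply/setXP; split | apply/and3P; split].
have hY : forall q, q \in Idx -> (#|Yq L A q.1.1 q.2.1 q.1.2 q.2.2|%:R : R) <= Bnd n'.
  move=> [[x0 P] [x1 P']] /setXP[/setXP[_ PD] /setXP[_ P'D]] /=.
  move: PD P'D; rewrite !inE => /andP[PA /eqP cP] /andP[P'A /eqP cP'].
  have hB := BB_term L x0 x1 PA P'A.
  have c1 : #|A :\: P| = n'.
    by rewrite cardsD (setIidPr PA) cP hA.
  have c2 : #|A :\: P'| = n'.
    by rewrite cardsD (setIidPr P'A) cP' hA.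
  have ltn' : (n' < n)%N by rewrite /n'; lia.
  have i1 := IH n' ltn' _ c1; have i2 := IH n' ltn' _ c2.
  move: hB; rewrite -(ler_nat R) natrM natrD => hB.
  have : 2 * (#|Yq L A x0 x1 P P'|%:R : R) <= 2 * Bnd n' by lra.
  lra.
have hb : (PC (F A :\: Good A) (F A :\: Good A) 0)%:R <= #|Idx|%:R * Bnd n'.
  apply: (@le_trans _ _ (#|\bigcup_(q in Idx) Yq L A q.1.1 q.2.1 q.1.2 q.2.2|%:R)).
    by rewrite ler_nat; apply: subset_leq_card cover.
  apply: (@le_trans _ _ (\sum_(q in Idx) #|Yq L A q.1.1 q.2.1 q.1.2 q.2.2|)%N%:R).
    by rewrite ler_nat; apply: card_bigcup_le.
  rewrite natr_sum (eq_bigr _ (fun _ _ => erefl)).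
  apply: (@le_trans _ _ (\sum_(q in Idx) Bnd n')); first by apply: ler_sum => q /hY.
  by rewrite sumr_const mulr_natl.
have hI : (#|Idx| <= (m * K ^ s.+1) ^ 2)%N.
  have hc : ('C(#|A|, s.+1) <= K ^ s.+1)%N.
    apply: leq_trans (bin_le_exp _ _) _; apply: leq_expb; exact: card_A.
  by rewrite !cardsX cards_draws -mulnn; apply: leq_mul; apply: leq_mul.
have em : (m ^ n = m ^ n' * m ^ (s - 1) * m ^ 2)%N.
  have e : (n = n' + (s - 1) + 2)%N by rewrite /n'; lia.
  by rewrite {1}e !expnD.
have ek : (K ^ n = K ^ n' * K ^ s.+1)%N by rewrite hn expnD.
have e4 : (4 ^ n = 4 ^ n' * 4 ^ s.+1)%N by rewrite hn expnD.
have id1 : ((m * K ^ s.+1) ^ 2 * (2 * 4 ^ n' * #|S| * K ^ n' * m ^ n') * m ^ (s - 1) =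
    2 * 4 ^ n' * K ^ s.+1 * (#|S| * (m ^ n * K ^ n)))%N.
  by rewrite em ek; ring.
have id2 : (2 * 4 ^ n * #|S| * K ^ n * m ^ n = 2 * 4 ^ s.+1 * 4 ^ n' * (#|S| * (m ^ n * K ^ n)))%N.
  by rewrite e4; ring.
rewrite /Bnd hq exprS id2 /TA.
move: hb; rewrite /Bnd => hb.
have c4 : (4 <= 4 ^ s.+1)%N by rewrite expnS; have := expn_gt0 4 s; lia.
have f1 : (1 <= 4 ^ n')%N by rewrite expn_gt0.
have rq1 := rhoq (n' %/ s.+1)%N.
have Mp0 : (0 < m ^ (s - 1))%N by rewrite expn_gt0 hm.
have hK0 := hK.
move: hK0 split gg hI id1 hb c4 f1 rq1 Mp0.
set a := (K ^ s.+1)%N. set mp := (m ^ (s - 1))%N. set f := (4 ^ n')%N.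
set c := (4 ^ s.+1)%N. set Xn := (#|S| * (m ^ n * K ^ n))%N.
set Bc := (2 * f * #|S| * K ^ n' * m ^ n')%N.
set I' := ((m * a) ^ 2)%N.
set g := PC (F A :&: Good A) _ _. set b := PC (F A :\: Good A) _ _.
set T := PC (F A) _ _. set rq := rho ^+ _.
move=> hK0 split gg hI id1 hb c4 f1 rq1 Mp0.
clearbody a mp f c Xn Bc I' g b T rq.
move: (#|Idx|) hI hb => idx hI hb.
have id1R := congr1 (fun x : nat => (x%:R : R)) id1; rewrite /= !natrM in id1R.
move: Mp0; rewrite -(ltr_nat R) => Mp0.
move: split gg hI hb c4 f1; rewrite -!(ler_nat R) ?natrM ?natrD.
have X0 := ler0n R Xn; have B0 := ler0n R Bc; have I0 := ler0n R idx.
have g0 := ler0n R g; have b0 := ler0n R b.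
move: id1R hK0 Mp0 X0 B0 I0 g0 b0 rq1 rho_ge0 hrho.
move: (T%:R) (g%:R) (b%:R) (idx%:R) (I'%:R) (Bc%:R) (mp%:R) (a%:R) (f%:R) (c%:R) (Xn%:R) rq rho.
move=> t g' b' id' i' bc mp' a' f' c' x rq' r.
move=> eid hk mp0 x0 bc0 id0 g0' b0' rq1' r0 r1 hs' hg hi hb' hc hf.
have h1 : i' * bc <= 2 * f' * r * x.
  have : (i' * bc) * mp' <= (2 * f' * r * x) * mp'.
    rewrite eid; have hfx : 0 <= 2 * f' * x by nra.
    nra.
  by rewrite ler_pM2r.
have i'0 : 0 <= i' by apply: le_trans hi.
have h2 : b' <= 2 * f' * r * x * rq'.
  apply: (le_trans hb'); have hbr : 0 <= bc * rq' by nra.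
  have hh : id' * (bc * rq') <= i' * (bc * rq') by nra.
  nra.
have P0 : 1 <= f' * r by nra.
have P1 : 1 <= f' * r * rq' by nra.
set P := f' * r * rq' in P1 *.
have hx : x <= x * P by nra.
have xP : 0 <= x * P by nra.
have hc' : 4 * (x * P) <= c' * (x * P) by nra.
have -> : 2 * c' * f' * x * (r * rq') = 2 * (c' * (x * P)) by rewrite /P; ring.
have e2 : 2 * f' * r * x * rq' = 2 * (x * P) by rewrite /P; ring.
rewrite e2 in h2.
lra.
Qed.

End Induction.

End P7.

Module P8.
Import P1 P2 P3 P4 P5 P6 P7.
Set Implicit Arguments. Unset Strict Implicit. Unset Printing Implicit Defensive.
Local Open Scope ring_scope.

Lemma F_setT N K (L : {set 'Z_N}) (r : {ffun 'I_K -> 'Z_N}) :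
  (r \in P3.F L setT) = [forall i, r i \in L].
Proof.
apply/memF/forallP => [[h _] i|h]; first by apply: h; rewrite inE.
by split=> // i; rewrite inE.
Qed.

Lemma Tk_TA N K (L : {set 'Z_N}) : (Tk K L <= TA L [set: 'I_K])%N.
Proof.
rewrite /Tk /TA /PC; apply: subset_leq_card; apply/subsetP => -[a b].
rewrite [in X in X -> _]inE /= => /andP[/forallP h /eqP e].
apply/setIdP; split.
  by apply/setXP; split; rewrite F_setT; apply/forallP => i; case/andP: (h i).
rewrite /= addr0 /sig.
have ez : forall f : {ffun 'I_K -> 'Z_N}, (\sum_(i < K) f i)%R = ((\sum_(i < K) (f i : nat))%N)%:R.
  by move=> f; rewrite natr_sum; apply: eq_bigr => i _; rewrite natr_Zp.
by rewrite !ez e.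
Qed.

Lemma Tk_L0 N K (L : {set 'Z_N}) : (0 < K)%N -> L = set0 -> Tk K L = 0%N.
Proof.
case: K => // K _ ->; rewrite /Tk; apply: eq_card0 => -[a b]; rewrite inE /=.
apply/negbTE; rewrite negb_and; apply/orP; left; rewrite negb_forall.
by apply/existsP; exists ord0; rewrite inE.
Qed.

End P8.

Module P9.
Import P1 P2 P3 P4 P5 P6 P7 P8.
Set Implicit Arguments. Unset Strict Implicit. Unset Printing Implicit Defensive.
Local Open Scope ring_scope.

Lemma ln_natX (R : realType) (a n : nat) : (0 < a)%N ->
  ln ((a ^ n)%N%:R : R) = n%:R * ln (a%:R : R).
Proof.
move=> a0; rewrite natrX lnXn ?mulr_natl // ltr0n //.
Qed.

Lemma final_real (R : realType) (K m s : nat) : (0 < K)%N -> (0 < m)%N -> (3 <= s)%N ->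
  (let x : R := (K ^ s.+1)%:R / (m ^ (s - 1))%:R in if x <= 1 then 1 else x) ^+ (K %/ s.+1) <=
  powR 2 ((2 * s * K)%:R * (log2 (K%:R : R)) ^+ 2 /
          log2 ((K ^ (2 * s) * m ^ (s - 2))%N)%:R).
Proof.
move=> K0 m0 s3.
set E := ((2 * s * K)%:R * _ / _).
have l2 : 0 < ln (2:R) by apply: ln_gt0; lra.
have hK1 : (1:R) <= K%:R by rewrite ler1n.
have hm1 : (1:R) <= m%:R by rewrite ler1n.
set al := ln (K%:R : R); set be := ln (m%:R : R).
have a0 : 0 <= al by apply: ln_ge0.
have b0 : 0 <= be by apply: ln_ge0.
have hD : log2 ((K ^ (2 * s) * m ^ (s - 2))%N%:R : R) =
    ((2 * s)%:R * al + (s - 2)%:R * be) / ln 2.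
  rewrite /log2 natrM lnM ?posrE ?ltr0n ?expn_gt0 ?K0 ?m0 //.
  by rewrite !ln_natX.
have E0 : 0 <= E.
  rewrite /E hD; apply: divr_ge0; first by apply: mulr_ge0 => //; rewrite sqr_ge0.
  by apply: divr_ge0; [apply: addr_ge0; apply: mulr_ge0 | apply: ltW].
have pE : 1 <= powR 2 E.
  rewrite /powR ifF; last by apply/negbTE; rewrite pnatr_eq0.
  apply: le_trans (expR_ge1Dx _); rewrite lerDl; apply: mulr_ge0 => //; exact: ltW.
move=> /=; set x := (K ^ s.+1)%:R / _.
case: (lerP x 1) => hx.
  by rewrite expr1n.
have x0 : 0 < x by apply: lt_trans hx; lra.
have mp0 : (0 : R) < (m ^ (s - 1))%:R by rewrite ltr0n expn_gt0 m0.
have kp0 : (0 : R) < (K ^ s.+1)%:R by rewrite ltr0n expn_gt0 K0.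
have lnx : ln x = (s.+1)%:R * al - (s - 1)%:R * be.
  by rewrite /x ln_div ?posrE // !ln_natX.
have lnx0 : 0 < ln x by apply: ln_gt0.
rewrite -{1}(lnK x0) -expRM_natl.
rewrite /powR ifF; last by apply/negbTE; rewrite pnatr_eq0.
rewrite ler_expR lnx.
have hq : ((K %/ s.+1) * s.+1 <= K)%N by apply: leq_trunc_div.
move: hq; rewrite -(ler_nat R) natrM => hq.
have eS1 : (s.+1%:R : R) = s%:R + 1 by rewrite -addn1 natrD.
have eSm1 : ((s - 1)%:R : R) = s%:R - 1 by rewrite natrB // (leq_trans _ s3).
have eSm2 : ((s - 2)%:R : R) = s%:R - 2 by rewrite natrB // (leq_trans _ s3).
have e2S : ((2 * s)%:R : R) = 2 * s%:R by rewrite natrM.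
have e2SK : ((2 * s * K)%:R : R) = 2 * s%:R * K%:R by rewrite !natrM.
have S3 : (3 : R) <= s%:R by rewrite (ler_nat R 3).
rewrite lnx in lnx0; rewrite eS1 in hq; rewrite eS1 eSm1 in lnx0; rewrite eS1 eSm1.
rewrite /E hD /log2 e2S eSm2 e2SK.
have Q0 := ler0n R (K %/ s.+1)%N.
move: ((K %/ s.+1)%N%:R) Q0 hq => Q Q0 hq.
have S0 := ler0n R s.
move: (s%:R) S0 S3 hq lnx0 => S S0 S3 hq lnx0.
have l20 : ln (2 : R) != 0 by rewrite gt_eqF.
have al0 : 0 < al by nra.
set D := (2 * S * al + (S - 2) * be).
have D0 : 0 < D by rewrite /D; nra.
rewrite -/al.
have Dn0 : D != 0 by rewrite gt_eqF.
have eE : 2 * S * K%:R * (al / ln 2) ^+ 2 / (D / ln 2) * ln 2 = 2 * S * K%:R * al ^+ 2 / D.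
  by field; apply/andP.
rewrite eE ler_pdivlMr //.
set L0 := (S + 1) * al - (S - 1) * be.
have LD0 : 0 <= L0 * D by apply: mulr_ge0; apply: ltW.
have h1 : L0 * D <= 2 * S * (S + 1) * al ^+ 2.
  rewrite /L0 /D.
  have hab : 0 <= al * be by nra.
  have hbb : 0 <= be * be by nra.
  have c1 : 0 <= S * S - S + 2 by nra.
  have c2 : 0 <= (S - 1) * (S - 2) by nra.
  have : 0 <= (S * S - S + 2) * (al * be) + (S - 1) * (S - 2) * (be * be).
    by apply: addr_ge0; apply: mulr_ge0.
  rewrite expr2; nra.
have h2 : Q * (S + 1) * (L0 * D) <= K%:R * (L0 * D) by apply: ler_wpM2r.
have h3 : K%:R * (L0 * D) <= K%:R * (2 * S * (S + 1) * al ^+ 2) by apply: ler_wpM2l.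
have h4 : (Q * (L0 * D)) * (S + 1) <= (2 * S * K%:R * al ^+ 2) * (S + 1).
  have -> : (Q * (L0 * D)) * (S + 1) = Q * (S + 1) * (L0 * D) by ring.
  have -> : (2 * S * K%:R * al ^+ 2) * (S + 1) = K%:R * (2 * S * (S + 1) * al ^+ 2) by ring.
  exact: le_trans h2 h3.
rewrite ler_pM2r in h4; last by nra.
by rewrite mulrA in h4.
Qed.

End P9.

Import P1 P2 P3 P4 P5 P6 P7 P8 P9.
Unset Implicit Arguments. Set Strict Implicit. Set Printing Implicit Defensive.
Local Open Scope ring_scope.

Theorem mainTheorem6 (R : realType) (N k s d : nat) (L : {set 'Z_N}) :
  (0 < k)%N -> (0 < d)%N -> (3 <= s)%N -> prime N -> (s.+1 <= N)%N ->
  in_Lambda_d d (2 * k) s L ->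
  ((Tk k L)%:R : R) <=
    ((2 ^ (9 * k) * k ^ k * #|L| ^ k * s.+1 ^ (2 * d))%N)%:R *
    powR 2 ((2 * s * k)%:R * (log2 (k%:R : R)) ^+ 2 /
            log2 ((k ^ (2 * s) * #|L| ^ (s - 2))%N)%:R).
Proof.
move=> k0 d0 s3 _ _ HL.
set E := (_ / _).
case: (posnP #|L|) => [m0|m0].
  rewrite (Tk_L0 k0 (cards0_eq m0)).
  by apply: mulr_ge0; [exact: ler0n | exact: powR_ge0].
pose x : R := (k ^ s.+1)%:R / (#|L| ^ (s - 1))%:R.
pose rho : R := if x <= 1 then 1 else x.
have mp0 : (0 : R) < (#|L| ^ (s - 1))%:R by rewrite ltr0n expn_gt0 m0.
have hrho : 1 <= rho by rewrite /rho; case: ifP => // /negbT; rewrite -ltNge => /ltW.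
have hK : ((k ^ s.+1)%:R : R) <= rho * (#|L| ^ (s - 1))%:R.
  rewrite /rho; case: ifP => h.
    by move: h; rewrite /x ler_pdivrMr // mul1r.
  by rewrite /x divfK // gt_eqF.
have hs : (0 < s)%N by apply: leq_trans s3.
have hA : #|[set: 'I_k]| = k by rewrite cardsT card_ord.
have mi := main_ind hs m0 hrho hK hA.
have t1 := Tk_TA k L.
have fr := final_real R k0 m0 s3.
rewrite -/x -/rho in fr.
apply: (le_trans (y := (TA L [set: 'I_k])%:R)); first by rewrite ler_nat.
apply: (le_trans mi); rewrite /Bnd.
apply: ler_pM; [exact: ler0n | by apply: exprn_ge0; apply: le_trans hrho | | exact: fr].
rewrite ler_nat.
have cS := card_S HL d0.
have h1 : (2 * 4 ^ k <= 2 ^ (9 * k))%N.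
  rewrite (_ : 4 = 2 ^ 2)%N // -expnM -expnS leq_exp2l //; lia.
have h2 : (#|S (N:=N) k s L| <= s.+1 ^ (2 * d))%N.
  apply: leq_trans cS _; rewrite expnM.
  apply: (@leq_trans ((2 * s).+1 ^ d)); first by apply: leq_pexp2l => //; lia.
  by apply: leq_expb; rewrite -mulnn; nia.
move: h1 h2; move: (2 * 4 ^ k)%N (2 ^ (9 * k))%N (#|S (N:=N) k s L|) (s.+1 ^ (2 * d))%N.
move: (k ^ k)%N (#|L| ^ k)%N => c e a A b B ha hb.
have := leq_mul ha hb => hab.
have := leq_mul (leq_mul hab (leqnn c)) (leqnn e).
by move=> h; apply: (leq_trans h); apply: eq_leq; ring.
Qed.
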